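(* Let $N>0$, $R=\mathbb{Q}[x_1,x_2,y_1,y_2]$, and let $X_\circ$, $X_\bullet$, $\pi_\circ,\pi_\bullet$ and $a_2$ be as in the context. Define the $R$-linear map $\chi_0:X_\circ\to X_\bullet\{-2\}$ by $\chi_0(1)=\frac12(x_1+y_1-x_2-y_2)\cdot1+a_2\,\theta_1\theta_2$, $\chi_0(\theta_1)=-\theta_2+\frac12(x_1+y_1)\theta_1$, $\chi_0(\theta_2)=\theta_2-\frac12(x_2+y_2)\theta_1$, $\chi_0(\theta_1\theta_2)=\theta_1\theta_2$. Then $\chi_0$ is a morphism of graded matrix factorisations and $\pi_\bullet\circ\chi_0=m\circ\pi_\circ$, where $m:R/(y_1-x_1,y_2-x_2)\to R/(y_1+y_2-x_1-x_2,\,y_1y_2-x_1x_2)\{-2\}$ is multiplication by $\frac12(x_1+y_1-x_2-y_2)$.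
   Context: Variables have degree $2$; $M\{m\}$ denotes $M$ with grading shifted up by $m$ ($M\{m\}_i=M_{i-m}$). $t_i=y_i-x_i$, $w_i=(y_i^{N+1}-x_i^{N+1})/(y_i-x_i)$, $s_1=y_1+y_2-x_1-x_2$, $s_2=y_1y_2-x_1x_2$; $u_1,u_2$ homogeneous with $y_1^{N+1}+y_2^{N+1}-x_1^{N+1}-x_2^{N+1}=u_1s_1+u_2s_2$ and invariant under interchanging $(x_1,x_2)$ with $(y_1,y_2)$; $a_2=\frac12u_2+(u_1+y_1u_2-w_2)/(x_1-y_1)$ (a polynomial). For homogeneous sequences $\boldsymbol a,\boldsymbol b$ with $\deg a_i+\deg b_i=2c$ ($c=N+1$), $\{\boldsymbol a,\boldsymbol b\}$ is the exterior algebra over $R$ on $\theta_1,\theta_2$ ($\mathbb{Z}_2$-degree $1$, internal degree $\deg a_i-c$) with differential $(\sum b_i\theta_i^* )\lrcorner(-)+(\sum a_i\theta_i)\wedge(-)$. $X_\circ=\{(w_1,w_2),(t_1,t_2)\}$, $X_\bullet=\{(u_1,u_2),(s_1,s_2)\}$. $\pi_\circ:X_\circ\to R/(t_1,t_2)$ and $\pi_\bullet:X_\bullet\to R/(s_1,s_2)$ are the projections onto the exterior degree $0$ part $R$ followed by the quotient map. *)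

(* Defs.v *)
From HB Require Import structures.
From mathcomp Require Import all_boot all_order all_algebra.
From mathcomp Require Import mpoly.
Set Implicit Arguments. Unset Strict Implicit. Unset Printing Implicit Defensive.
Import Order.TTheory GRing.Theory Num.Theory.
Local Open Scope ring_scope.

Notation R := {mpoly rat[4]}.
Definition var (k : nat) : R := 'X_(inord k).
Definition x1 : R := var 0.
Definition x2 : R := var 1.
Definition y1 : R := var 2.
Definition y2 : R := var 3.
Definition xs (i : 'I_2) : R := if i == ord0 then x1 else x2.
Definition ys (i : 'I_2) : R := if i == ord0 then y1 else y2.
Definition halfR : R := (2^-1 : rat)%:MP.

(* t_i = y_i - x_i,  w_i = (y_i^(N+1) - x_i^(N+1))/(y_i - x_i) = sum_k y_i^k x_i^(N-k) *)
Definition tt (i : 'I_2) : R := ys i - xs i.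
Definition ww (N : nat) (i : 'I_2) : R :=
  \sum_(k < N.+1) ys i ^+ k * xs i ^+ (N - k).
Definition s1 : R := y1 + y2 - x1 - x2.
Definition s2 : R := y1 * y2 - x1 * x2.

Definition swapxy (p : R) : R := p \mPo [tuple y1; y2; x1; x2].

(* q-homogeneity (variables have degree 2; degree may be any integer;
   the zero polynomial is homogeneous of every degree) *)
Definition qhomog (p : R) (k : int) : Prop :=
  p = 0 \/ exists d : nat, k = (2 * d)%N%:Z /\ p \is d.-homog.

(* Koszul matrix factorisation {a,b} over R with two generators:
   data a_i, b_i, the degrees deg a_i, and c. *)
Record kmf := KMF {
  mf_a : 'I_2 -> R; mf_b : 'I_2 -> R; mf_dega : 'I_2 -> int; mf_c : int }.

(* elements of the exterior algebra over R on theta_0, theta_1: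
   coefficient of theta_S (S increasing) *)
Definition ext := {ffun {set 'I_2} -> R}.

Definition tsign (i : 'I_2) (S : {set 'I_2}) : R :=
  (-1) ^+ #|[set j in S | (j < i)%N]|.
Definition wedge (i : 'I_2) (f : ext) : ext :=
  [ffun S : {set 'I_2} => if i \in S then tsign i (S :\ i) * f (S :\ i) else 0].
Definition contr (i : 'I_2) (f : ext) : ext :=
  [ffun S : {set 'I_2} => if i \in S then 0 else tsign i S * f (i |: S)].
Definition kd (X : kmf) (f : ext) : ext :=
  [ffun S : {set 'I_2} => \sum_(i < 2) (mf_b X i * contr i f S + mf_a X i * wedge i f S)].

Definition kdeg (X : kmf) (S : {set 'I_2}) : int :=
  \sum_(i in S) (mf_c X - mf_dega X i).
(* f is homogeneous of degree j in X{m} (X{m}_j = X_{j-m}) *)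
Definition homog_in (X : kmf) (m : int) (f : ext) (j : int) : Prop :=
  forall S : {set 'I_2}, qhomog (f S) (j - m - kdeg X S).
Definition parity_in (f : ext) (e : bool) : Prop :=
  forall S : {set 'I_2}, odd #|S| != e -> f S = 0.

Definition mf_morphism (X Y : kmf) (m : int) (chi : ext -> ext) : Prop :=
  [/\ forall f g, chi (f + g) = chi f + chi g,
      forall (r : R) (f : ext), chi [ffun S : {set 'I_2} => r * f S] = [ffun S : {set 'I_2} => r * chi f S],
      forall f e, parity_in f e -> parity_in (chi f) e,
      forall f j, homog_in X 0 f j -> homog_in Y m (chi f) j
    & forall f, chi (kd X f) = kd Y (chi f)].

Definition Xcirc (N : nat) : kmf :=
  KMF (ww N) tt (fun _ => (2 * N)%N%:Z) (N.+1)%:Z.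
Definition Xbullet (N : nat) (u1 u2 : R) : kmf :=
  KMF (fun i => if i == ord0 then u1 else u2)
      (fun i => if i == ord0 then s1 else s2)
      (fun i => if i == ord0 then (2 * N)%N%:Z else (2 * N)%N%:Z - 2)
      (N.+1)%:Z.

Definition ebasis (S : {set 'I_2}) : ext := [ffun T : {set 'I_2} => (T == S)%:R].
Definition sc (r : R) (f : ext) : ext := [ffun S : {set 'I_2} => r * f S].
Definition th1 : {set 'I_2} := [set ord0].
Definition th2 : {set 'I_2} := [set ord_max].
Definition th12 : {set 'I_2} := [set: 'I_2].

Definition mfactor : R := halfR * (x1 + y1 - x2 - y2).

Definition chi0_img (a2 : R) (S : {set 'I_2}) : ext :=
  if S == set0 then sc mfactor (ebasis set0) + sc a2 (ebasis th12)
  else if S == th1 then - ebasis th2 + sc (halfR * (x1 + y1)) (ebasis th1)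
  else if S == th2 then ebasis th2 - sc (halfR * (x2 + y2)) (ebasis th1)
  else ebasis th12.

Definition chi0 (a2 : R) (f : ext) : ext :=
  \sum_(S : {set 'I_2}) sc (f S) (chi0_img a2 S).

Definition in_ideal2 (g1 g2 p : R) : Prop :=
  exists r1 r2 : R, p = r1 * g1 + r2 * g2.

(* Main.v *)
Require Import Defs.
From HB Require Import structures.
From mathcomp Require Import all_boot all_order all_algebra.
From mathcomp Require Import mpoly.
From mathcomp Require Import ring zify.
Import Order.TTheory GRing.Theory Num.Theory.
Local Open Scope ring_scope.


Lemma I2E (i : 'I_2) : i = ord0 \/ i = ord_max.
Proof. by case: i => [[|[|//]]] H; [left|right]; apply: val_inj. Qed.

Lemma setI2P (S T : {set 'I_2}) :
  (ord0 \in S) = (ord0 \in T) -> (ord_max \in S) = (ord_max \in T) -> S = T.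
Proof. by move=> h0 h1; apply/setP => i; case: (I2E i) => ->. Qed.

Lemma eqsetE (S T : {set 'I_2}) :
  (S == T) = ((ord0 \in S) == (ord0 \in T)) && ((ord_max \in S) == (ord_max \in T)).
Proof.
apply/eqP/andP => [->|[/eqP h0 /eqP h1]]; first by rewrite !eqxx.
exact: setI2P.
Qed.

Lemma set4 (S : {set 'I_2}) : S = set0 \/ S = th1 \/ S = th2 \/ S = th12.
Proof.
case E0: (ord0 \in S); case E1: (ord_max \in S).
- by right; right; right; apply: setI2P; rewrite !inE ?E0 ?E1.
- by right; left; apply: setI2P; rewrite !inE ?E0 ?E1.
- by right; right; left; apply: setI2P; rewrite !inE ?E0 ?E1.
- by left; apply: setI2P; rewrite !inE ?E0 ?E1.
Qed.

Lemma sum_set4 (V : nmodType) (F : {set 'I_2} -> V) :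
  \sum_(S : {set 'I_2}) F S = F set0 + F th1 + F th2 + F th12.
Proof.
rewrite (bigD1 set0) //= (bigD1 th1) ?eqsetE ?inE //= (bigD1 th2) ?eqsetE ?inE //=.
rewrite (bigD1 th12) ?eqsetE ?inE //= big1 ?addr0 ?addrA //.
by move=> S; case: (set4 S) => [->|[->|[->|->]]]; rewrite !eqsetE !inE.
Qed.

Lemma sum_I2 (V : nmodType) (F : 'I_2 -> V) :
  \sum_(i < 2) F i = F ord0 + F ord_max.
Proof.
rewrite big_ord_recl big_ord_recl big_ord0 addr0; congr (_ + F _).
exact: val_inj.
Qed.

Lemma cardI2 (S : {set 'I_2}) : #|S| = ((ord0 \in S) + (ord_max \in S))%N.
Proof.
case: (set4 S) => [->|[->|[->|->]]]; rewrite ?cards0 ?cards1 ?cardsT ?card_ord ?inE //.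
Qed.

Lemma tsign0 S : tsign ord0 S = 1.
Proof. by rewrite /tsign cardI2 !inE /= !andbF. Qed.
Lemma tsign1 S : tsign ord_max S = if ord0 \in S then -1 else 1.
Proof. by rewrite /tsign cardI2 !inE /= !andbF !andbT; case: (ord0 \in S); rewrite ?expr1 ?expr0. Qed.

Lemma sD1 : th1 :\ ord0 = set0. Proof. by apply: setI2P; rewrite !inE. Qed.
Lemma sD2 : th2 :\ ord_max = set0. Proof. by apply: setI2P; rewrite !inE. Qed.
Lemma sD3 : th12 :\ ord0 = th2. Proof. by apply: setI2P; rewrite !inE. Qed.
Lemma sD4 : th12 :\ ord_max = th1. Proof. by apply: setI2P; rewrite !inE. Qed.
Lemma sU1 : ord0 |: set0 = th1. Proof. by apply: setI2P; rewrite !inE. Qed.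
Lemma sU2 : ord_max |: set0 = th2. Proof. by apply: setI2P; rewrite !inE. Qed.
Lemma sU3 : ord0 |: th2 = th12. Proof. by apply: setI2P; rewrite !inE. Qed.
Lemma sU4 : ord_max |: th1 = th12. Proof. by apply: setI2P; rewrite !inE. Qed.

Ltac ev := rewrite ?sD1 ?sD2 ?sD3 ?sD4 ?sU1 ?sU2 ?sU3 ?sU4 ?tsign0 ?tsign1 ?eqsetE ?inE /=.

Section K.
Variable X : kmf.
Variable g : ext.
Let a := mf_a X. Let b := mf_b X.
Lemma kd0 : kd X g set0 = b ord0 * g th1 + b ord_max * g th2.
Proof. rewrite /kd ffunE sum_I2 /contr /wedge !ffunE; ev. rewrite /a /b; ring. Qed.
Lemma kd1 : kd X g th1 = - b ord_max * g th12 + a ord0 * g set0.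
Proof. rewrite /kd ffunE sum_I2 /contr /wedge !ffunE; ev. rewrite /a /b; ring. Qed.
Lemma kd2 : kd X g th2 = b ord0 * g th12 + a ord_max * g set0.
Proof. rewrite /kd ffunE sum_I2 /contr /wedge !ffunE; ev. rewrite /a /b; ring. Qed.
Lemma kd3 : kd X g th12 = a ord0 * g th2 - a ord_max * g th1.
Proof. rewrite /kd ffunE sum_I2 /contr /wedge !ffunE; ev. rewrite /a /b; ring. Qed.
End K.

Section C.
Variable a2 : R.
Variable f : ext.
Lemma chi0E S : chi0 a2 f S = f set0 * chi0_img a2 set0 S + f th1 * chi0_img a2 th1 S
  + f th2 * chi0_img a2 th2 S + f th12 * chi0_img a2 th12 S.
Proof. by rewrite /chi0 sum_ffunE sum_set4 /sc !ffunE. Qed.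
Ltac cc := rewrite chi0E /chi0_img /sc /ebasis; ev; rewrite !ffunE; ev; ring.
Lemma chi00 : chi0 a2 f set0 = f set0 * mfactor. Proof. cc. Qed.
Lemma chi01 : chi0 a2 f th1 = f th1 * (halfR * (x1 + y1)) - f th2 * (halfR * (x2 + y2)). Proof. cc. Qed.
Lemma chi02 : chi0 a2 f th2 = - f th1 + f th2. Proof. cc. Qed.
Lemma chi03 : chi0 a2 f th12 = f set0 * a2 + f th12. Proof. cc. Qed.
End C.



Lemma qhomog_eq p k l : k = l -> qhomog p k -> qhomog p l.
Proof. by move=> ->. Qed.
Lemma qhomog0 k : qhomog 0 k. Proof. by left. Qed.
Lemma qhomogD p q k : qhomog p k -> qhomog q k -> qhomog (p + q) k.
Proof.
case=> [->|[d [-> hp]]]; first by rewrite add0r.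
case=> [->|[e [he hq]]]; first by rewrite addr0; right; exists d.
right; exists d; split => //.
have ed : e = d by move: he => /eqP; rewrite eqz_nat; lia.
by rewrite ed in hq; apply: rpredD.
Qed.
Lemma qhomogN p k : qhomog p k -> qhomog (- p) k.
Proof. case=> [->|[d [-> hp]]]; first by rewrite oppr0; left. by right; exists d; rewrite rpredN. Qed.
Lemma qhomogM p q k l : qhomog p k -> qhomog q l -> qhomog (p * q) (k + l).
Proof.
case=> [->|[d [-> hp]]]; first by rewrite mul0r; left.
case=> [->|[e [-> hq]]]; first by rewrite mulr0; left.
right; exists (d + e)%N; split; first by apply/eqP; rewrite -PoszD eqz_nat; lia.
exact: dhomogM.
Qed.
Lemma qhomog_d p d : p \is d.-homog -> qhomog p (2 * d)%N.
Proof. by move=> h; right; exists d. Qed.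

Lemma var_homog k : var k \is 1.-homog.
Proof. by rewrite /var dhomogX /= mdeg1. Qed.
Lemma C_homog (c : rat) : (c%:MP : R) \is 0.-homog.
Proof. by rewrite -[c%:MP]mulr1 mul_mpolyC; apply: dhomogZ; apply: dhomog1. Qed.

Lemma ww_homog N i : ww N i \is N.-homog.
Proof.
apply: rpred_sum => k _.
have hy : ys i \is 1.-homog by rewrite /ys; case: (i == ord0); exact: var_homog.
have hx : xs i \is 1.-homog by rewrite /xs; case: (i == ord0); exact: var_homog.
have := dhomogM (dhomogMn k hy) (dhomogMn (N - k) hx).
by have -> : (1 * k + 1 * (N - k))%N = N by have := ltn_ord k; lia.
Qed.

Lemma pihomogM1 (q P : R) b : q \is 1.-homog ->
  q * pihomog mdeg b P = pihomog mdeg b.+1 (q * P).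
Proof.
move=> hq; set k := maxn (mmeasure mdeg P) b.+1.
rewrite {2}(@pihomog_partitionE _ _ mdeg k P) ?leq_maxl // [X in _ = pihomog _ _ X]mulr_sumr.
have -> : forall F : 'I_k -> R, pihomog mdeg b.+1 (\sum_(d < k) F d) = \sum_(d<k) pihomog mdeg b.+1 (F d).
  by move=> F; apply: big_morph; [exact: pihomogD| exact: pihomog0].
have bk : (b < k)%N by rewrite leq_maxr.
rewrite (bigD1 (Ordinal bk)) //= big1 ?addr0.
  by rewrite [RHS]pihomog_dE //; have := dhomogM hq (pihomogP mdeg b P); rewrite add1n.
move=> d /eqP hd; apply: (pihomog_ne0 (d := (1 + d)%N)).
  apply/eqP => h; apply: hd; apply: val_inj => /=; lia.
exact: dhomogM hq (pihomogP mdeg _ P).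
Qed.

Lemma homog_cancel (q P : R) d : q != 0 -> q \is 1.-homog -> q * P \is d.+1.-homog ->
  P \is d.-homog.
Proof.
move=> nq hq hP.
have z : forall b, b != d -> pihomog mdeg b P = 0.
  move=> b hb; apply/eqP; rewrite -(mulIr_eq0 _ (mulIf nq)) mulrC pihomogM1 //.
  by rewrite (pihomog_ne0 (d := d.+1)) //; apply: contra hb => /eqP [->].
set k := maxn (mmeasure mdeg P) d.+1.
rewrite (@pihomog_partitionE _ _ mdeg k P) ?leq_maxl //.
have dk : (d < k)%N by rewrite leq_maxr.
rewrite (bigD1 (Ordinal dk)) //= big1 ?addr0; first exact: pihomogP.
move=> b hb; apply: z; apply: contra hb => /eqP hb; apply/eqP; exact: val_inj.
Qed.



Lemma Eh0 : 2 * halfR - 1 = 0.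
Proof.
apply/eqP; rewrite subr_eq0; apply/eqP.
rewrite /halfR -[2 : R](rmorph_nat (@mpolyC 4 rat)) -rmorphM /=.
by rewrite mulfV.
Qed.

Lemma tnz : y1 - x1 != 0.
Proof.
apply/negP => /eqP /(congr1 (mcoeff U_(inord 2))).
rewrite mcoeffB /y1 /x1 /var !mcoeffXU mcoeff0.
have -> : (inord 0 == inord 2 :> 'I_4) = false.
  by apply/negP => /eqP /(congr1 val); rewrite /= !inordK.
by rewrite eqxx subr0 => /eqP; rewrite oner_eq0.
Qed.

Lemma ttww N i : tt i * ww N i = ys i ^+ N.+1 - xs i ^+ N.+1.
Proof.
rewrite /tt /ww; have E := subrXX (xs i) (ys i) N.+1; rewrite /= in E.
under eq_bigr do rewrite mulrC.
by rewrite -[ys i ^+ _ - _]opprB E; ring.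
Qed.

Lemma by_comb (L R' D : R) : L - R' = D -> D = 0 -> L = R'.
Proof. by move=> h h0; apply/eqP; rewrite -subr_eq0 h h0. Qed.

Arguments qhomog_eq {p k l}.
Arguments qhomogD {p q k}.
Arguments qhomogM {p q k l}.
Arguments qhomogN {p k}.
Arguments qhomog_d {p d}.
Lemma qD p q k l m : qhomog p k -> qhomog q l -> k = m -> l = m -> qhomog (p + q) m.
Proof. by move=> hp hq <- e; rewrite e in hq; apply: qhomogD. Qed.
Lemma qM p q k l m : qhomog p k -> qhomog q l -> k + l = m -> qhomog (p * q) m.
Proof. by move=> hp hq <-; apply: qhomogM. Qed.
Lemma qvar k : qhomog (var k) 2.
Proof. by apply: qhomog_eq _ (qhomog_d (var_homog k)). Qed.
Lemma qh2 (c : R) : qhomog c 2 -> qhomog (halfR * c) 2.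
Proof. by move=> hc; apply: (qM _ _ _ _ _ (qhomog_d (C_homog _)) hc). Qed.
Lemma qmf : qhomog mfactor 2.
Proof.
apply: qh2; apply: qhomogD; last apply: qhomogN; last exact: qvar.
apply: qhomogD; last apply: qhomogN; last exact: qvar.
by apply: qhomogD; exact: qvar.
Qed.
Lemma qs (k l : nat) : qhomog (halfR * (var k + var l)) 2.
Proof. by apply: qh2; apply: qhomogD; exact: qvar. Qed.

Lemma kdeg0 X : kdeg X set0 = 0. Proof. by rewrite /kdeg big_set0. Qed.
Lemma kdeg1 X : kdeg X th1 = mf_c X - mf_dega X ord0. Proof. by rewrite /kdeg big_set1. Qed.
Lemma kdeg2 X : kdeg X th2 = mf_c X - mf_dega X ord_max. Proof. by rewrite /kdeg big_set1. Qed.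
Lemma kdeg3 X : kdeg X th12 = (mf_c X - mf_dega X ord0) + (mf_c X - mf_dega X ord_max).
Proof. by rewrite /kdeg (eq_bigl (fun _ => true)) ?sum_I2 // => i; rewrite in_setT. Qed.
Arguments qD {p q k l m}.
Arguments qM {p q k l m}.



Lemma ttE0 : tt ord0 = y1 - x1. Proof. by []. Qed.
Lemma ttE1 : tt ord_max = y2 - x2. Proof. by []. Qed.

Theorem lemmaA6 (N : nat) (u1 u2 a2 : R) :
  (0 < N)%N ->
  u1 \is N.-homog -> u2 \is N.-1.-homog ->
  y1 ^+ N.+1 + y2 ^+ N.+1 - x1 ^+ N.+1 - x2 ^+ N.+1 = u1 * s1 + u2 * s2 ->
  swapxy u1 = u1 -> swapxy u2 = u2 ->
  (x1 - y1) * (a2 - halfR * u2) = u1 + y1 * u2 - ww N ord_max ->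
  mf_morphism (Xcirc N) (Xbullet N u1 u2) (-2) (chi0 a2) /\
  (forall p : R, in_ideal2 (tt ord0) (tt ord_max) p -> in_ideal2 s1 s2 (mfactor * p)) /\
  (forall f : ext, in_ideal2 s1 s2 (chi0 a2 f set0 - mfactor * f set0)).
Proof.
move=> HN hu1 hu2 Hsum _ _ Ha.
have [n En] : exists n, N = n.+1 by exists N.-1; lia.
subst N; rewrite /= in hu2.
set w1 := ww n.+1 ord0; set w2 := ww n.+1 ord_max; set h := halfR.
have Eh : 2 * h - 1 = 0 := Eh0.
have Ea : (x1 - y1) * (a2 - h * u2) - (u1 + y1 * u2 - w2) = 0 by rewrite Ha subrr.
have Es : (y1 - x1) * w1 + (y2 - x2) * w2 - u1 * s1 - u2 * s2 = 0.
  have e0 := ttww n.+1 ord0; have e1 := ttww n.+1 ord_max.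
  rewrite ttE0 /ys /xs /= in e0; rewrite ttE1 /ys /xs /= in e1.
  rewrite /w1 /w2 e0 e1.
  transitivity (y1^+n.+2 + y2^+n.+2 - x1^+n.+2 - x2^+n.+2 - (u1*s1 + u2*s2)); first ring.
  by rewrite Hsum subrr.
have K3 : (y1 - x1) * a2 - w2 + u1 + u2 * (h * (x1 + y1)) = 0.
  apply: (@by_comb _ _ (- ((x1 - y1) * (a2 - h * u2) - (u1 + y1 * u2 - w2)) + y1 * u2 * (2 * h - 1))).
    rewrite /h; ring.
  by rewrite Ea Eh; ring.
have K2 : w2 - w1 - s1 * a2 - u2 * mfactor = 0.
  apply/eqP; rewrite -(mulIr_eq0 _ (mulIf tnz)) mulrC; apply/eqP.
  apply: (@by_comb _ _ (s1 * ((x1 - y1) * (a2 - h * u2) - (u1 + y1 * u2 - w2))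
      - ((y1 - x1) * w1 + (y2 - x2) * w2 - u1 * s1 - u2 * s2)
      + (u2 * s2 - s1 * y1 * u2) * (2 * h - 1))).
    rewrite /h /mfactor /s1 /s2; ring.
  by rewrite Ea Es Eh; ring.
have K1 : w1 * (h * (x1 + y1)) - w2 * (h * (x2 + y2)) + s2 * a2 - u1 * mfactor = 0.
  apply/eqP; rewrite -(mulIr_eq0 _ (mulIf tnz)) mulrC; apply/eqP.
  apply: (@by_comb _ _ (- s2 * ((x1 - y1) * (a2 - h * u2) - (u1 + y1 * u2 - w2))
      + h * (x1 + y1) * ((y1 - x1) * w1 + (y2 - x2) * w2 - u1 * s1 - u2 * s2)
      + (s2 * u1 - w2 * s2 + s2 * y1 * u2) * (2 * h - 1))).
    rewrite /h /mfactor /s1 /s2; ring.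
  by rewrite Ea Es Eh; ring.
have K4 : (y2 - x2) * a2 + w1 - u1 - u2 * (h * (x2 + y2)) = 0.
  apply: (@by_comb _ _ (- (w2 - w1 - s1 * a2 - u2 * mfactor)
     - ((y1 - x1) * a2 - w2 + u1 + u2 * (h * (x1 + y1))))).
    rewrite /h /mfactor /s1; ring.
  by rewrite K2 K3; ring.
have hA : a2 \is n.-homog.
  have hP : a2 - h * u2 \is n.-homog.
    apply: (@homog_cancel (x1 - y1)).
    - by rewrite -opprB oppr_eq0 tnz.
    - by apply: rpredB; apply: var_homog.
    rewrite /h Ha; apply: rpredB; last exact: ww_homog.
    by apply: rpredD => //; have := dhomogM (var_homog 2) hu2; rewrite add1n.
  rewrite -[a2](subrK (h * u2)); apply: rpredD => //.
  by have := dhomogM (C_homog (2^-1)) hu2; rewrite add0n; apply.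
split; last split.
- split.
  + move=> f g; apply/ffunP => S; rewrite !ffunE !chi0E !ffunE; ring.
  + move=> r f; apply/ffunP => S; rewrite !ffunE !chi0E !ffunE; ring.
  + move=> f e Hf S.
    move: (Hf set0) (Hf th1) (Hf th2) (Hf th12); rewrite !cardI2 !inE /=.
    case: e Hf => _ z0 z1 z2 z3;
    [ have {}z0 := z0 isT; have {}z3 := z3 isT | have {}z1 := z1 isT; have {}z2 := z2 isT ];
    case: (set4 S) => [->|[->|[->|->]]]; rewrite ?cards0 ?cardI2 ?inE //= => _;
    rewrite ?chi00 ?chi01 ?chi02 ?chi03 ?z0 ?z1 ?z2 ?z3; ring.
  + move=> f j Hf S.
    have q0 := Hf set0; have q1 := Hf th1; have q2 := Hf th2; have q3 := Hf th12.
    rewrite ?kdeg0 ?kdeg1 ?kdeg2 ?kdeg3 /= in q0 q1 q2 q3.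
    have qA : qhomog a2 (2 * n)%N := qhomog_d hA.
    case: (set4 S) => [->|[->|[->|->]]]; rewrite ?chi00 ?chi01 ?chi02 ?chi03 ?kdeg0 ?kdeg1 ?kdeg2 ?kdeg3 /=.
    * apply: (qM q0 qmf); lia.
    * apply: (qD (qM q1 (qs 0 2) erefl) (qhomogN (qM q2 (qs 1 3) erefl))); lia.
    * apply: (qD (qhomogN q1) q2); lia.
    * apply: (qD (qM q0 qA erefl) q3); lia.
  + move=> f; apply/ffunP => S.
    case: (set4 S) => [->|[->|[->|->]]];
      rewrite ?chi00 ?chi01 ?chi02 ?chi03 ?kd0 ?kd1 ?kd2 ?kd3 ?chi00 ?chi01 ?chi02 ?chi03 /= ?ttE0 ?ttE1 -/w1 -/w2 -/h.
    * apply: (@by_comb _ _ ((f th2 * s2 - f th1 * s2) * (2 * h - 1))).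
        rewrite /h /mfactor /s1 /s2; ring.
      by rewrite Eh; ring.
    * apply: (@by_comb _ _ (- f th12 * s2 * (2 * h - 1) + f set0 * (w1 * (h * (x1 + y1)) - w2 * (h * (x2 + y2)) + s2 * a2 - u1 * mfactor))).
        rewrite /h /mfactor /s1 /s2; ring.
      by rewrite Eh K1; ring.
    * apply: (@by_comb _ _ (f set0 * (w2 - w1 - s1 * a2 - u2 * mfactor))).
        rewrite /h /mfactor /s1 /s2; ring.
      by rewrite K2; ring.
    * apply: (@by_comb _ _ (f th1 * ((y1 - x1) * a2 - w2 + u1 + u2 * (h * (x1 + y1))) + f th2 * ((y2 - x2) * a2 + w1 - u1 - u2 * (h * (x2 + y2))))).
        rewrite /h /mfactor /s1 /s2; ring.
      by rewrite K3 K4; ring.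
- move=> p [r1 [r2 ->]]; exists (r1 * (h * (x1 + y1)) - r2 * (h * (x2 + y2))), (- r1 + r2).
  apply: (@by_comb _ _ ((r2 * s2 - r1 * s2) * (2 * h - 1))).
    rewrite ttE0 ttE1 /h /mfactor /s1 /s2; ring.
  by rewrite Eh; ring.
- by move=> f; exists 0, 0; rewrite chi00 mulrC subrr; ring.
Qed.
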